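(* Let $R$ and $S$ be transverse étale equivalence relations on a compact, metrizable, zero-dimensional space $X$. Then the equivalence relation $R\vee S$ on $X$ generated by $R$ and $S$ equals $(r\times s)(R\times_XS)$ and also equals $(r\times s)(S\times_XR)$, and the maps $r\times s:R\times_XS\to R\vee S$ and $r\times s:S\times_XR\to R\vee S$ are bijections.
   Context: An étale equivalence relation on $X$ is a countable equivalence relation $R\subset X\times X$ with a locally compact, Hausdorff, second countable topology in which the product $(x,y)\cdot(y,z)=(x,z)$ of composable pairs is continuous, the inverse is a homeomorphism, and the range map $r(x,y)=x$ is a local homeomorphism. For equivalence relations $R,S$ on $X$, $R\times_XS=\{((x,y),(y,z)):(x,y)\in R,(y,z)\in S\}$ with the relative topology from $R\times S$, and $r((x,y),(y,z))=x$, $s((x,y),(y,z))=z$, $(r\times s)((x,y),(y,z))=(x,z)$. $R$ and $S$ are transverse if $R\cap S=\Delta_X=\{(x,x):x\in X\}$ and there is a homeomorphism $h:R\times_XS\to S\times_XR$ with $r\circ h=r$ and $s\circ h=s$. *)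

(* Defs.v *)
From HB Require Import structures.
From mathcomp Require Import all_boot all_order all_algebra.
From mathcomp Require Import all_classical all_reals all_analysis.
From mathcomp Require Import Rstruct Rstruct_topology.
From Stdlib Require Import Rdefinitions.

Set Implicit Arguments.
Unset Strict Implicit.
Unset Printing Implicit Defensive.
Import Order.TTheory GRing.Theory Num.Theory.
Local Open Scope classical_set_scope.
Local Open Scope ring_scope.

Definition metrizable (X : topologicalType) : Prop :=
  exists d : X -> X -> Rdefinitions.R,
    [/\ (forall x y, 0 <= d x y),
        (forall x y, d x y = 0 <-> x = y),
        (forall x y, d x y = d y x),
        (forall x y z, d x z <= d x y + d y z) &
        (forall (x : X) (A : set X),
            nbhs x A <-> exists2 e : Rdefinitions.R, 0 < e & [set y | d x y < e] `<=` A)].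

Definition zero_dim_space (X : topologicalType) : Prop :=
  exists2 B : set (set X), basis B & B `<=` clopen.

Definition local_homeo (G X : topologicalType) (f : G -> X) : Prop :=
  forall g : G, exists U : set G,
    [/\ [/\ open U, U g & open (f @` U)],
        (forall a b, U a -> U b -> f a = f b -> a = b),
        {within U, continuous f} &
        exists h : X -> G,
          (forall y, (f @` U) y -> U (h y) /\ f (h y) = y) /\
          {within f @` U, continuous h}].

Definition is_equivalence (X : Type) (E : set (X * X)) : Prop :=
  [/\ (forall x, E (x, x)),
      (forall x y, E (x, y) -> E (y, x)) &
      (forall x y z, E (x, y) -> E (y, z) -> E (x, z))].

(* An étale equivalence relation on X: the relation is the image of the
   injective map i : G -> X * X, and G carries the étale topology. *)
Definition etale_eqrel (X G : topologicalType) (i : G -> X * X) : Prop :=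
  [/\ [/\ injective i,
          is_equivalence (range i) &
          (forall x : X, countable [set y | range i (x, y)])],
      [/\ locally_compact [set: G], hausdorff_space G & @second_countable G],
      (exists m : G * G -> G,
          (forall p : G * G, (i p.1).2 = (i p.2).1 ->
               i (m p) = ((i p.1).1, (i p.2).2)) /\
          {within [set p : G * G | (i p.1).2 = (i p.2).1], continuous m}),
      (* inverse is a homeomorphism (it is an involution) *)
      (exists inv : G -> G,
          [/\ (forall g, i (inv g) = ((i g).2, (i g).1)),
              (forall g, inv (inv g) = g) & continuous inv]) &
      local_homeo (fun g => (i g).1)].

(* R x_X S as a subset of R x S (relative topology from the product). *)
Definition fiber_prod (X G H : Type) (iR : G -> X * X) (iS : H -> X * X)
  : set (G * H) := [set p | (iR p.1).2 = (iS p.2).1].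

Definition rs_map (X G H : Type) (iR : G -> X * X) (iS : H -> X * X)
  (p : G * H) : X * X := ((iR p.1).1, (iS p.2).2).

Definition transverse (X GR GS : topologicalType)
  (iR : GR -> X * X) (iS : GS -> X * X) : Prop :=
  (forall x y, range iR (x, y) -> range iS (x, y) -> x = y) /\
  exists (h : GR * GS -> GS * GR) (k : GS * GR -> GR * GS),
    [/\ (forall p, fiber_prod iR iS p -> fiber_prod iS iR (h p)) /\
        (forall q, fiber_prod iS iR q -> fiber_prod iR iS (k q)),
        (forall p, fiber_prod iR iS p -> k (h p) = p),
        (forall q, fiber_prod iS iR q -> h (k q) = q),
        {within fiber_prod iR iS, continuous h} /\
        {within fiber_prod iS iR, continuous k} &
        (forall p, fiber_prod iR iS p ->
           (iS (h p).1).1 = (iR p.1).1 /\ (iR (h p).2).2 = (iS p.2).2)].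

Definition eqrel_join (X : Type) (E F : set (X * X)) : set (X * X) :=
  [set p | forall T : set (X * X), is_equivalence T ->
             E `<=` T -> F `<=` T -> T p].

(* Main.v *)
Require Import Defs.
From HB Require Import structures.
From mathcomp Require Import all_boot all_order all_algebra.
From mathcomp Require Import all_classical all_reals all_analysis.
Local Open Scope classical_set_scope.

Lemma inj_gen (X G H : Type) (iR : G -> X*X) (iS : H -> X*X) :
  injective iR -> injective iS -> is_equivalence (range iR) ->
  is_equivalence (range iS) ->
  (forall x y, range iR (x,y) -> range iS (x,y) -> x = y) ->
  {in fiber_prod iR iS &, injective (rs_map iR iS)}.
Proof.
move=> iRi iSi [_ sR tR] [_ sS tS] tr [a b] [a' b'].
rewrite !inE /fiber_prod /rs_map /=.
have rR : forall g, range iR (iR g) by move=> g; exists g.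
have rS : forall g, range iS (iS g) by move=> g; exists g.
move: (rR a) (rR a') (rS b) (rS b').
case Ea: (iR a) => [x y]; case Ea': (iR a') => [x' y']; case Eb: (iS b) => [y1 z];
case Eb': (iS b') => [y1' z'] /= ha ha' hb hb' e1 e2 [E1 E2].
subst.
have yy : y1 = y1'.
  apply: tr; first by apply: tR (sR _ _ ha) ha'.
  by apply: tS hb (sS _ _ hb').
subst.
by rewrite (iRi a a'); [rewrite (iSi b b') // Eb Eb' | rewrite Ea Ea'].
Qed.

Definition Cset {X G H : Type} (iR : G -> X*X) (iS : H -> X*X) : set (X*X) :=
  [set p | exists y, range iR (p.1, y) /\ range iS (y, p.2)].

Lemma Cset_img (X G H : Type) (iR : G -> X*X) (iS : H -> X*X) :
  rs_map iR iS @` fiber_prod iR iS = Cset iR iS.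
Proof.
apply/seteqP; split.
  move=> _ [[a b] /= hab <-]; rewrite /rs_map /=.
  exists (iR a).2; split; first by exists a => //; case: (iR a).
  by exists b => //; rewrite hab; case: (iS b).
move=> [x z] [y [[a _ ea] [b _ eb]]] /=.
exists (a, b); first by rewrite /fiber_prod /= ea eb.
by rewrite /rs_map /= ea eb.
Qed.

Theorem lemma3p2 (X GR GS : topologicalType)
  (iR : GR -> X * X) (iS : GS -> X * X) :
  compact [set: X] -> metrizable X -> zero_dim_space X ->
  etale_eqrel iR -> etale_eqrel iS -> transverse iR iS ->
  [/\ eqrel_join (range iR) (range iS) = rs_map iR iS @` fiber_prod iR iS,
      eqrel_join (range iR) (range iS) = rs_map iS iR @` fiber_prod iS iR,
      {in fiber_prod iR iS &, injective (rs_map iR iS)} &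
      {in fiber_prod iS iR &, injective (rs_map iS iR)}].
Proof.
move=> _ _ _ [[iRi eqR _] _ _ _ _] [[iSi eqS _] _ _ _ _] [tr [h [k [[hF kF] kh hk _ hE]]]].
have IJ : rs_map iR iS @` fiber_prod iR iS = rs_map iS iR @` fiber_prod iS iR.
  apply/seteqP; split.
    move=> _ [p hp <-]; exists (h p); first exact: hF.
    by rewrite /rs_map; case: (hE p hp) => -> ->.
  move=> _ [q hq <-]; exists (k q); first exact: kF.
  rewrite -{2}(hk q hq) /rs_map; case: (hE (k q) (kF q hq)) => -> ->.
  done.
rewrite !Cset_img in IJ.
have [rfR sR tR] := eqR; have [rfS sS tS] := eqS.
have eqC : is_equivalence (Cset iR iS).
  split.
  - by move=> x; exists x; split.
  - move=> x z [y [h1 h2]] /=; rewrite IJ; exists y; split; [exact: sS | exact: sR].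
  - move=> x z v [y [h1 h2]] [u [h3 h4]] /=.
    have : Cset iS iR (y, u) by exists z.
    rewrite -IJ => -[w [h5 h6]]; exists w; split; [exact: tR h1 h5 | exact: tS h6 h4].
have JC : eqrel_join (range iR) (range iS) = Cset iR iS.
  apply/seteqP; split.
    move=> p; apply => //.
      by move=> [x y] hxy; exists y; split => //; exact: rfS.
    by move=> [x y] hxy; exists x; split => //; exact: rfR.
  move=> [x z] [y [h1 h2]] T [_ _ tT] RT ST; exact: tT (RT _ h1) (ST _ h2).
split.
- by rewrite JC Cset_img.
- by rewrite JC IJ Cset_img.
- exact: inj_gen.
- apply: inj_gen => // x y h1 h2; exact: tr.
Qed.
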